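(* Let $\Gamma=\langle \gamma_1,\dots,\gamma_k\rangle$ and $F=\langle f_1,\dots,f_k\rangle$ be two marked $k$-generated groups, with $F$ finite, and let $\Delta$ be their diagonal product. Then there exist constants $C_1,C_2>0$ such that for every word $w$ in the free group $\mathbb{F}_k$, $$|w^{\Gamma}| \leq |w^{\Delta}| \leq C_1|w^{\Gamma}|+C_2,$$ where norms are word lengths with respect to the marked generating sets. Moreover, the constants $C_1,C_2$ depend only on $F$ and locally on $\Gamma$ in the following sense: there exists $R>0$ such that if $\Gamma'=\langle\gamma'_1,\dots,\gamma'_k\rangle$ is any marked $k$-generated group such that $\Gamma$ is a marked quotient of $\Gamma'$ and the marked balls of radius $R$ in $\Gamma'$ and $\Gamma$ are equivalent, then for every word $w\in\mathbb{F}_k$, $$|w^{\Gamma'}| \leq |w^{\Delta'}| \leq C_1|w^{\Gamma'}|+C_2,$$ where $\Delta'$ is the diagonal product of $\Gamma'$ and $F$.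
   Context: A marked $k$-generated group is a group together with an ordered generating set of $k$ elements, equivalently a quotient of the free group $\mathbb{F}_k$ of rank $k$. The diagonal product of marked groups $\Gamma=\langle \gamma_1,\dots,\gamma_k\rangle$ and $F=\langle f_1,\dots,f_k\rangle$ is the subgroup $\Delta$ of $\Gamma\times F$ generated by $(\gamma_1,f_1),\dots,(\gamma_k,f_k)$, marked by this ordered generating set. For a word $w\in\mathbb{F}_k$, $w^{\Gamma}$, $w^F$, $w^{\Delta}$ denote its evaluations in $\Gamma$, $F$, $\Delta$. $\Gamma$ is a marked quotient of $\Gamma'$ if $\gamma'_i\mapsto\gamma_i$ induces a surjective homomorphism (equivalently $w^{\Gamma'}=e$ implies $w^{\Gamma}=e$ for all $w$). The marked balls of radius $R$ in $\Gamma$ and $\Gamma'$ are equivalent if for every word $w\in\mathbb{F}_k$ of length at most $2R$, $w^{\Gamma'}=e$ iff $w^{\Gamma}=e$. *)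

(* Defs.v *)
From Stdlib Require List.
From mathcomp Require Import all_boot.
From mathcomp Require Import boolp.
Set Implicit Arguments. Unset Strict Implicit. Unset Printing Implicit Defensive.

Record Grp := MkGrp {
  gcar :> Type;
  gmul : gcar -> gcar -> gcar;
  ginv : gcar -> gcar;
  gone : gcar;
  gmulA : forall x y z, gmul x (gmul y z) = gmul (gmul x y) z;
  gmul1 : forall x, gmul gone x = x;
  gmulV : forall x, gmul (ginv x) x = gone }.

Definition finite_grp (F : Grp) : Prop := exists s : seq F, forall x : F, List.In x s.

(* Words in the free group F_k: sequences of letters (i, b), meaning the
   generator i (b = false) or its inverse (b = true). *)
Definition word (k : nat) := seq ('I_k * bool).

Definition eval (k : nat) (G : Grp) (gam : 'I_k -> G) (w : word k) : G :=
  foldr (fun l g => gmul (if l.2 then ginv (gam l.1) else gam l.1) g) (gone G) w.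

Definition generates (k : nat) (G : Grp) (gam : 'I_k -> G) : Prop :=
  forall g : G, exists w : word k, eval gam w = g.

Definition elt_len (k : nat) (T : Type) (ev : word k -> T) (w : word k) : nat :=
  ex_minn (P := fun n => `[< exists u : word k, size u = n /\ ev u = ev w >])
    (ex_intro _ (size w) (introT (asboolP _) (ex_intro _ w (conj erefl erefl)))).

Definition norm_G (k : nat) (G : Grp) (gam : 'I_k -> G) (w : word k) : nat :=
  elt_len (eval gam) w.

(* |w^Delta| where Delta = diagonal product of (G,gam) and (F,f): the subgroup
   of G x F generated by the pairs (gam i, f i); w^Delta = (w^G, w^F). *)
Definition norm_diag (k : nat) (G F : Grp) (gam : 'I_k -> G) (f : 'I_k -> F)
    (w : word k) : nat :=
  elt_len (fun u => (eval gam u, eval f u)) w.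

Definition marked_quotient (k : nat) (G' G : Grp) (gam' : 'I_k -> G')
    (gam : 'I_k -> G) : Prop :=
  forall w : word k, eval gam' w = gone G' -> eval gam w = gone G.

Definition balls_equiv (k : nat) (R : nat) (G' G : Grp) (gam' : 'I_k -> G')
    (gam : 'I_k -> G) : Prop :=
  forall w : word k, size w <= 2 * R ->
    (eval gam' w = gone G' <-> eval gam w = gone G).

(* Main.v *)
Require Import Defs.
From mathcomp Require Import all_boot.
From mathcomp Require Import boolp.
From Stdlib Require Import Classical.

Section GrpLemmas.
Variable G : Grp.
Implicit Types x y : G.

Lemma mulgVr x : gmul x (ginv x) = gone G.
Proof.
set y := ginv x.
rewrite -[gmul x y]gmul1 -(gmulV y) -gmulA (gmulA y x y).
by rewrite /y gmulV gmul1 gmulV.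
Qed.

Lemma mulg1r x : gmul x (gone G) = x.
Proof. by rewrite -(gmulV x) gmulA mulgVr gmul1. Qed.

Lemma invgK x : ginv (ginv x) = x.
Proof. by rewrite -[ginv (ginv x)]mulg1r -(gmulV x) gmulA gmulV gmul1. Qed.

Lemma left_right x y : gmul y x = gone G -> gmul x y = gone G.
Proof.
move=> H.
have -> : y = ginv x by rewrite -[y]mulg1r -(mulgVr x) gmulA H gmul1.
exact: mulgVr.
Qed.
End GrpLemmas.

Section Words.
Variables (k : nat) (G : Grp) (gam : 'I_k -> G).

Lemma eval_cat (u v : word k) : eval gam (u ++ v) = gmul (eval gam u) (eval gam v).
Proof.
elim: u => [|a u IH] /=; first by rewrite gmul1.
by rewrite IH gmulA.
Qed.

Definition winv (w : word k) : word k := rev (map (fun l => (l.1, ~~ l.2)) w).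

Lemma eval_winv_l (w : word k) : gmul (eval gam (winv w)) (eval gam w) = gone G.
Proof.
elim: w => [|a w IH] /=; first by rewrite gmul1.
rewrite /winv /= rev_cons -cats1 -/(winv w) eval_cat /=.
rewrite mulg1r -gmulA (gmulA _ _ (eval gam w)).
case: a => i [] /=; rewrite ?invgK ?gmulV ?mulgVr gmul1 //.
Qed.

Lemma eval_winv_r (w : word k) : gmul (eval gam w) (eval gam (winv w)) = gone G.
Proof. apply: left_right; exact: eval_winv_l. Qed.
End Words.
Arguments winv {k}.

Section Len.
Variables (k : nat) (T : Type) (ev : word k -> T).

Lemma elt_len_spec (w : word k) : exists u, size u = elt_len ev w /\ ev u = ev w.
Proof.
rewrite /elt_len; case: ex_minnP => n /asboolP [u [H1 H2]] _.
by exists u.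
Qed.

Lemma elt_len_min (w u : word k) : ev u = ev w -> elt_len ev w <= size u.
Proof.
move=> H; rewrite /elt_len; case: ex_minnP => n _ Hmin.
apply: Hmin; apply/asboolP; by exists u.
Qed.
End Len.

Lemma upper (k : nat) (G F : Grp) (gam : 'I_k -> G) (f : 'I_k -> F) (N : nat) :
  (forall r : word k, eval gam r = gone G -> exists r' : word k,
      size r' <= N /\ eval gam r' = gone G /\ eval f r' = eval f r) ->
  forall w : word k,
    norm_G gam w <= norm_diag gam f w <= 1 * norm_G gam w + N.+1.
Proof.
move=> HN w; apply/andP; split.
  have [u [Hs Hu]] := @elt_len_spec _ _ (fun u => (eval gam u, eval f u)) w.
  rewrite /norm_diag -Hs /norm_G; apply: elt_len_min.
  by case: Hu.
have [v [Hs Hv]] := @elt_len_spec _ _ (eval gam) w.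
have Hr : eval gam (winv v ++ w) = gone G.
  by rewrite eval_cat -Hv eval_winv_l.
have [r' [Hsz [Hg Hf]]] := HN _ Hr.
apply: (@leq_trans (size (v ++ r'))).
  apply: elt_len_min => /=.
  rewrite !eval_cat Hg mulg1r Hv Hf eval_cat gmulA eval_winv_r gmul1 //.
rewrite size_cat mul1n /norm_G -Hs leq_add2l.
exact: leqW.
Qed.

Lemma witnesses (k : nat) (G F : Grp) (gam : 'I_k -> G) (f : 'I_k -> F) :
  finite_grp F ->
  exists N, forall r : word k, eval gam r = gone G -> exists r' : word k,
      size r' <= N /\ eval gam r' = gone G /\ eval f r' = eval f r.
Proof.
move=> [s Hs].
suff [N HN] : exists N, forall x, List.In x s -> forall r : word k,
   eval gam r = gone G -> eval f r = x -> exists r' : word k,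
      size r' <= N /\ eval gam r' = gone G /\ eval f r' = x.
  exists N => r Hr; exact: (HN _ (Hs _) r Hr erefl).
elim: s {Hs} => [|x s [N IH]]; first by exists 0.
case: (classic (exists r : word k, eval gam r = gone G /\ eval f r = x)).
  move=> [r0 [H1 H2]]; exists (maxn N (size r0)) => y /= [<-|Hy] r Hr Hf.
    by exists r0; rewrite leq_maxr.
  have [r' [A B]] := IH y Hy r Hr Hf.
  exists r'; split => //; exact: (leq_trans A (leq_maxl _ _)).
move=> Hno; exists N => y /= [<-|Hy] r Hr Hf.
  by exfalso; apply: Hno; exists r.
exact: IH y Hy r Hr Hf.
Qed.

Theorem lemma2p1 (k : nat) (G F : Grp) (gam : 'I_k -> G) (f : 'I_k -> F)
  (genG : generates gam) (genF : generates f) (finF : finite_grp F) :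
  exists C1 C2 : nat,
    [/\ 0 < C1, 0 < C2,
      (forall w : word k,
         norm_G gam w <= norm_diag gam f w <= C1 * norm_G gam w + C2) &
      exists R : nat, 0 < R /\
        forall (G' : Grp) (gam' : 'I_k -> G'),
          generates gam' -> marked_quotient gam' gam -> balls_equiv R gam' gam ->
          forall w : word k,
            norm_G gam' w <= norm_diag gam' f w <= C1 * norm_G gam' w + C2].
Proof.
have [N HN] := @witnesses _ _ _ gam f finF.
exists 1, N.+1; split => //.
  exact: upper HN.
exists N.+1; split => // G' gam' _ Hq Hb.
apply: upper => r Hr.
have [r' [Hs [Hg Hf]]] := HN r (Hq r Hr).
exists r'; split => //; split => //.
apply: (proj2 (Hb r' _)) => //.
apply: (leq_trans Hs); rewrite mul2n -addnn; apply: leq_trans (leqnSn N) (leq_addr _ _).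
Qed.
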